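(* Let $G$ be a finite simple graph with $n$ vertices and $m$ edges. If $G$ is H--cordial, then $m-n$ is even.
   Context: A labeling of a graph $G$ is a map $f:E(G)\to\{-1,+1\}$. Given a labeling $f$, for each vertex $v$ define $f(v)=\sum_{e\in I(v)} f(e)$, where $I(v)$ is the set of edges incident to $v$. For an integer $c$, $e_f(c)$ denotes the number of edges $e$ with $f(e)=c$, and $v_f(c)$ denotes the number of vertices $v$ with $f(v)=c$. A labeling $f$ is H--cordial if there is a positive constant $K$ such that $|f(v)|=K$ for every vertex $v$, and $|e_f(1)-e_f(-1)|\le 1$ and $|v_f(K)-v_f(-K)|\le 1$. A graph is H--cordial if it admits an H--cordial labeling. *)

(* Defs.v *)
From mathcomp Require Import all_boot all_order all_algebra.
Set Implicit Arguments. Unset Strict Implicit. Unset Printing Implicit Defensive.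
Import Order.TTheory GRing.Theory Num.Theory.
Local Open Scope ring_scope.

Definition simple_graph (T : finType) (e : rel T) : Prop :=
  symmetric e /\ irreflexive e.

Definition edges (T : finType) (e : rel T) : {set {set T}} :=
  [set E : {set T} | [exists x, exists y, e x y && (E == [set x; y])]].

(* A labeling assigns +1 or -1 to every edge (values off edges irrelevant). *)
Definition is_labeling (T : finType) (e : rel T) (f : {set T} -> int) : Prop :=
  forall E, E \in edges e -> f E = 1 \/ f E = -1.

Definition vlabel (T : finType) (e : rel T) (f : {set T} -> int) (v : T) : int :=
  \sum_(E in edges e | v \in E) f E.

Definition e_count (T : finType) (e : rel T) (f : {set T} -> int) (c : int) : nat :=
  #|[set E in edges e | f E == c]|.

Definition v_count (T : finType) (e : rel T) (f : {set T} -> int) (c : int) : nat :=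
  #|[set v : T | vlabel e f v == c]|.

Definition H_cordial_labeling (T : finType) (e : rel T) (f : {set T} -> int) : Prop :=
  is_labeling e f /\
  exists K : int, 0 < K /\
    (forall v : T, `|vlabel e f v| = K) /\
    `|(e_count e f 1)%:Z - (e_count e f (-1))%:Z| <= 1 /\
    `|(v_count e f K)%:Z - (v_count e f (- K))%:Z| <= 1.

Definition H_cordial (T : finType) (e : rel T) : Prop :=
  exists f : {set T} -> int, H_cordial_labeling e f.

(* Main.v *)
Require Import Defs.
From mathcomp Require Import all_boot all_order all_algebra zify.
Import GRing.Theory Num.Theory.
Local Open Scope ring_scope.

Lemma arith_aux (a b c d : nat) (K : int) : 0 < K -> `|a%:Z - b%:Z| <= 1 -> `|c%:Z - d%:Z| <= 1 ->
  2 * (a%:Z - b%:Z) = K * (c%:Z - d%:Z) -> (2 %| ((a + b)%N%:Z - (c+d)%N%:Z))%Z.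
Proof. move=> K0 h1 h2 h.
have: (c%:Z - d%:Z = -1 \/ c%:Z - d%:Z = 0 \/ c%:Z - d%:Z = 1) by lia.
case=> [hh|[hh|hh]]; rewrite hh ?mulrN1 ?mulr0 ?mulr1 in h; lia. Qed.

Theorem lemma2 (T : finType) (e : rel T) :
  simple_graph e -> H_cordial e ->
  (2 %| (#|edges e|%:Z - #|T|%:Z))%Z.
Proof.
move=> [esym eirr] [f [lab [K [K0 [hK [he hv]]]]]].

have cardE : #|edges e| = (e_count e f 1 + e_count e f (-1))%N.
  rewrite -(cardsID [set E in edges e | f E == 1] (edges e)) /e_count; congr (_ + _)%N; apply: eq_card => E;
  rewrite !inE.
  - by rewrite andbA andbb.
  - case hP: [exists x, _] => //=; rewrite ?andbF ?andbT //.
    have Ee : E \in edges e by rewrite inE hP.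
    by case: (lab E Ee) => ->.

have cardT : #|T| = (v_count e f K + v_count e f (-K))%N.
  rewrite -(cardsC [set v : T | vlabel e f v == K]) /v_count; congr (_ + _)%N; apply: eq_card => v;
  rewrite !inE //.
  move: (hK v); set x := vlabel e f v => hx.
  have : x = K \/ x = -K by lia.
  case => ->; rewrite eqxx /=.
    by symmetry; apply/eqP; lia.
  by apply/eqP; lia.
have sumE : \sum_(E in edges e) f E = (e_count e f 1)%:Z - (e_count e f (-1))%:Z.
  rewrite (bigID (fun E => f E == 1)) /=.
  rewrite (eq_bigr (fun=> 1)); last by move=> E /andP [_ /eqP].
  rewrite [X in _ + X](eq_bigr (fun=> -1)); last first.
    by move=> E /andP [Ee]; case: (lab E Ee) => -> //.
  rewrite !sumr_const /e_count mulNrn !natz; congr (_ - Posz _).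
    by congr Posz; apply: eq_card => E; rewrite unfold_in /= !inE.
  apply: eq_card => E; rewrite unfold_in /= !inE.
  case hP: [exists x, _] => //=.
  have Ee : E \in edges e by rewrite inE hP.
  by case: (lab E Ee) => ->.
have sumV : \sum_v vlabel e f v = K * ((v_count e f K)%:Z - (v_count e f (-K))%:Z).
  rewrite (bigID (fun v => vlabel e f v == K)) /=.
  rewrite (eq_bigr (fun=> K)); last by move=> v /eqP.
  rewrite [X in _ + X](eq_bigr (fun=> -K)); last first.
    move=> v; move: (hK v); set x := vlabel e f v => hx hne.
    have : x = K \/ x = -K by lia.
    by case => // hxK; rewrite hxK eqxx in hne.
  rewrite (eq_bigl (fun v => v \in [set v | vlabel e f v == K])); last first.
    by move=> v; rewrite inE.
  rewrite [X in _ + X](eq_bigl (fun v => v \in [set v | vlabel e f v == -K])); last first.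
    move=> v; rewrite inE.
    move: (hK v); set x := vlabel e f v => hx.
    have : x = K \/ x = -K by lia.
    case => ->; rewrite eqxx /=.
      by symmetry; apply/eqP; lia.
    by apply/eqP; lia.
  have s2 : \sum_(i in [set v | vlabel e f v == - K]) - K = - K * (v_count e f (-K))%:Z.
    by rewrite sumr_const -mulr_natr natz.
  have s1 : \sum_(i in [set v | vlabel e f v == K]) K = K * (v_count e f K)%:Z.
    by rewrite sumr_const -mulr_natr natz.
  by rewrite s1 s2 mulNr -mulrBr.
have dbl : \sum_v vlabel e f v = 2 * \sum_(E in edges e) f E.
  rewrite /vlabel.
  under eq_bigr => v _ do rewrite big_mkcondr /=.
  rewrite exchange_big /= mulr_sumr; apply: eq_bigr => E.
  rewrite inE => /existsP [x /existsP [y /andP [exy /eqP ->]]].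
  rewrite -big_mkcond /= sumr_const cards2.
  have -> : (x != y) by apply/eqP => xy; move: exy; rewrite xy eirr.
  by rewrite mulr_natl.
rewrite cardE cardT; apply: (arith_aux _ _ _ _ _ K0 he hv).
by rewrite -sumE -dbl sumV.
Qed.
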